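(* There exist absolute constants $C_0,C_1>0$ such that for every $c=-2-t$ with $0<t<1$ the following hold: (a) $|r_n(c)|\le 2+C_0\,4^{n-1}t$ for all $1\le n\le k(c)$; (b) $t\le C_1 4^{-k(c)}$.
   Context: For real $c$ let $r_n(c)=f_c^{\circ n}(0)$ where $f_c(z)=z^2+c$; thus $r_1(c)=c$ and $r_{n+1}(c)=r_n(c)^2+c$. For $-3<c<-2$, $k(c)$ denotes the smallest positive integer $k$ such that $r_{k+1}(c)/r_k(c)\ge 36$. *)

(* Defs.v *)
From Stdlib Require Import Reals.
Open Scope R_scope.

(* r n c = f_c^{o n}(0), f_c(z) = z^2 + c.  So r 0 c = 0, r 1 c = c,
   r (n+1) c = (r n c)^2 + c. *)
Fixpoint r (n : nat) (c : R) : R :=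
  match n with
  | O => 0
  | S m => (r m c) ^ 2 + c
  end.

Definition is_k (c : R) (k : nat) : Prop :=
  (1 <= k)%nat /\
  r (S k) c / r k c >= 36 /\
  (forall j : nat, (1 <= j)%nat -> (j < k)%nat -> r (S j) c / r j c < 36).

(* Main.v *)
Require Import Defs.
From Stdlib Require Import Reals Lra Lia Psatz Classical Arith Wf_nat.
Open Scope R_scope.

Lemma exp_le_m : forall x y, x <= y -> exp x <= exp y.
Proof. intros x y H. destruct (Rle_lt_or_eq_dec x y H) as [H1|H1].
  left; apply exp_increasing; auto. subst; lra. Qed.

Lemma pow4_ge : forall m, 1 + INR m <= 4 ^ m.
Proof. induction m.
  - change (INR 0) with 0. change (4^0) with 1. lra.
  - rewrite S_INR. change (4 ^ S m) with (4 * 4 ^ m). pose proof (pos_INR m). lra. Qed.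

Lemma r_S : forall n c, r (S n) c = r n c ^ 2 + c.
Proof. reflexivity. Qed.

Section T.
Variable t : R.
Hypothesis ht0 : 0 < t.
Hypothesis ht1 : t < 1.

Lemma lower : forall m, r (m+2) (-2-t) - 2 - t/3 >= 4^m * (8*t/3).
Proof.
  induction m.
  - simpl. nra.
  - replace (S m + 2)%nat with (S (m+2)) by lia. rewrite r_S.
    simpl (4 ^ S m). set (x := r (m+2) (-2-t)) in *. clearbody x. pose proof (pow2_ge_0 (x-2)). nra.
Qed.

Lemma e_ge : forall m, r (m+2) (-2-t) - 2 >= 3 * t.
Proof. intros m. pose proof (lower m). pose proof (pow4_ge m). pose proof (pos_INR m). nra. Qed.

Lemma upper : forall m, (r (m+2) (-2-t) - 2) * exp (-(r (m+2) (-2-t) - 2)/8) <= 4^m * (4*t).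
Proof.
  induction m.
  - assert (R2 : r (0+2) (-2-t) = 2 + 3*t + t^2) by (simpl; ring).
    rewrite R2. replace (2 + 3*t + t^2 - 2) with (3*t+t^2) by ring.
    assert (H: exp (-(3*t+t^2)/8) <= 1).
    { rewrite <- exp_0. apply exp_le_m. nra. }
    assert (0 < exp (-(3*t+t^2)/8)) by apply exp_pos.
    change (4^0) with 1. nra.
  - replace (S m + 2)%nat with (S (m+2)) by lia. rewrite r_S.
    simpl (4 ^ S m). pose proof (e_ge m) as He.
    set (x := r (m+2) (-2-t)) in *.
    set (e := x - 2) in *.
    replace (x ^ 2 + (-2 - t) - 2) with (e^2 + 4*e - t) by (unfold e; ring).
    clearbody e. clearbody x.
    set (e' := e^2 + 4*e - t).
    set (A := exp (-e/8)) in *.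
    set (B := exp (-e/4)).
    assert (HA : 0 < A) by apply exp_pos.
    assert (HB : 0 < B) by apply exp_pos.
    assert (HX : exp (-e'/8) <= A * B).
    { unfold A, B. rewrite <- exp_plus. apply exp_le_m. unfold e'. nra. }
    assert (HBe : B * exp (e/4) = 1).
    { unfold B. rewrite <- exp_plus. replace (-e/4 + e/4) with 0 by field. apply exp_0. }
    assert (H1 : 1 + e/4 <= exp (e/4)) by apply exp_ineq1_le.
    assert (H2 : (1 + e/4) * B <= 1) by nra.
    assert (He' : 0 <= e') by (unfold e'; nra).
    assert (Hpx : 0 < exp (-e'/8)) by apply exp_pos.
    assert (H3 : e' * exp (-e'/8) <= e' * (A*B)) by nra.
    assert (H4 : e' * (A*B) <= 4 * (e * A) * ((1 + e/4) * B)).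
    { unfold e'. nra. }
    assert (H5 : 4 * (e * A) * ((1 + e/4) * B) <= 4 * (e * A)).
    { assert (0 <= e*A) by nra. nra. }
    nra.
Qed.

Lemma ebound : forall m, r (m+2) (-2-t) - 2 <= 1400 ->
   r (m+2) (-2-t) - 2 <= 4 ^ (m+1) * t * exp 175.
Proof.
  intros m Hm. pose proof (upper m) as U.
  set (e := r (m+2) (-2-t) - 2) in *.
  assert (HE : exp (-e/8) * exp (e/8) = 1).
  { rewrite <- exp_plus. replace (-e/8 + e/8) with 0 by field. apply exp_0. }
  assert (Hb : exp (e/8) <= exp 175) by (apply exp_le_m; lra).
  pose proof (exp_pos (-e/8)). pose proof (exp_pos (e/8)).
  assert (H4 : 0 < 4 ^ m) by (apply pow_lt; lra).
  rewrite pow_add. simpl (4^1).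
  assert (e <= 4 ^ m * (4 * t) * exp (e/8)).
  { replace e with (e * exp (-e/8) * exp (e/8)) at 1 by (rewrite Rmult_assoc, HE; ring).
    apply Rmult_le_compat_r; lra. }
  assert (0 <= 4 ^ m * (4 * t)) by nra. nra.
Qed.

End T.

Lemma min_exists : forall (P : nat -> Prop) m, (1 <= m)%nat -> P m ->
  exists k, (1 <= k)%nat /\ P k /\ forall j, (1 <= j)%nat -> (j < k)%nat -> ~ P j.
Proof.
  intros P m. induction m as [m IH] using (well_founded_induction lt_wf). intros H1 Hm.
  destruct (classic (exists j, (1 <= j)%nat /\ (j < m)%nat /\ P j)) as [[j [Hj1 [Hj2 Hj3]]]|N].
  - apply (IH j); auto.
  - exists m. split; [auto|split; [auto|]]. intros j Hj1 Hj2 Pj. apply N. eauto.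
Qed.

Theorem mainTheorem6 :
  exists C0 C1 : R, 0 < C0 /\ 0 < C1 /\
    forall t : R, 0 < t -> t < 1 ->
      let c := -2 - t in
      exists k : nat, is_k c k /\
        (forall n : nat, (1 <= n)%nat -> (n <= k)%nat ->
           Rabs (r n c) <= 2 + C0 * 4 ^ (n - 1) * t) /\
        t <= C1 / 4 ^ k.
Proof.
  exists (exp 175), 1000. split; [apply exp_pos|]. split; [lra|].
  intros t ht0 ht1 c. unfold c.
  set (P := fun j => r (S j) (-2-t) / r j (-2-t) >= 36).
  destruct (INR_archimed t 15 ht0) as [m0 Hm0].
  assert (Pm : P (m0 + 2)%nat).
  { unfold P. pose proof (lower t m0). pose proof (pow4_ge m0).
    rewrite r_S. set (x := r (m0+2) (-2-t)) in *.
    assert (Hx : x >= 42) by nra.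
    apply Rle_ge. apply Rmult_le_reg_r with x; [lra|].
    unfold Rdiv. rewrite Rmult_assoc, Rinv_l by lra. nra. }
  destruct (min_exists P (m0+2) ltac:(lia) Pm) as [k [Hk1 [Pk Hmin]]].
  assert (Hr : forall n, (2 <= n)%nat -> r n (-2-t) - 2 >= 3 * t).
  { intros n Hn. replace n with ((n-2)+2)%nat by lia. apply e_ge; auto. }
  assert (HnP : forall j, (2 <= j)%nat -> ~ P j -> r j (-2-t) < 37).
  { intros j Hj NP. unfold P in NP. pose proof (Hr j Hj).
    assert (Hq : r (S j) (-2-t) / r j (-2-t) < 36) by lra.
    rewrite r_S in Hq. set (x := r j (-2-t)) in *.
    assert (x ^ 2 + (-2 - t) < 36 * x).
    { replace (x ^ 2 + (-2 - t)) with ((x ^ 2 + (-2 - t)) / x * x) by (field; lra). nra. }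
    nra. }
  assert (Hk2 : (2 <= k)%nat).
  { destruct (Nat.eq_dec k 1) as [E|E]; [|lia]. subst k. exfalso. unfold P in Pk.
    assert (E2 : r 2 (-2-t) = 2 + 3*t + t^2) by (simpl; ring).
    assert (E1 : r 1 (-2-t) = -2 - t) by (simpl; ring).
    rewrite E2, E1 in Pk.
    assert ((2 + 3*t + t^2) / (-2 - t) < 0).
    { unfold Rdiv. assert (Hi: / (-2-t) < 0) by (apply Rinv_lt_0_compat; lra). assert (0 < 2 + 3*t+t^2) by nra. nra. }
    lra. }
  assert (Hbig : forall n, (2 <= n)%nat -> (n <= k)%nat -> r n (-2-t) - 2 <= 1400).
  { intros n Hn Hnk. destruct (Nat.eq_dec n k) as [E|E].
    - subst n. destruct (Nat.eq_dec k 2) as [E2|E2].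
      + subst k. simpl. nra.
      + assert (h := HnP (k-1)%nat ltac:(lia) (Hmin (k-1)%nat ltac:(lia) ltac:(lia))).
        pose proof (Hr (k-1)%nat ltac:(lia)).
        replace k with (S (k-1)) by lia. rewrite r_S. nra.
    - pose proof (HnP n Hn (Hmin n ltac:(lia) ltac:(lia))). lra. }
  exists k. split; [|split].
  - split; [auto|split; [exact Pk|]]. intros j Hj1 Hj2. pose proof (Hmin j Hj1 Hj2) as N.
    unfold P in N. lra.
  - intros n Hn1 Hnk. assert (HC : 1 <= exp 175).
    { pose proof (exp_ineq1_le 175). lra. }
    destruct (Nat.eq_dec n 1) as [E|E].
    + subst n. simpl. rewrite Rabs_left by lra. nra.
    + pose proof (Hr n ltac:(lia)). rewrite Rabs_right by lra.
      replace (n - 1)%nat with ((n-2)+1)%nat by lia.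
      pose proof (ebound t ht0 ht1 (n-2)%nat) as H0.
      replace ((n-2)+2)%nat with n in H0 by lia.
      specialize (H0 (Hbig n ltac:(lia) Hnk)). lra.
  - assert (H4 : 0 < 4 ^ k) by (apply pow_lt; lra).
    apply Rmult_le_reg_r with (4 ^ k); [lra|].
    unfold Rdiv. rewrite Rmult_assoc, Rinv_l by lra.
    destruct (Nat.eq_dec k 2) as [E|E].
    + subst k. simpl. lra.
    + assert (h := HnP (k-1)%nat ltac:(lia) (Hmin (k-1)%nat ltac:(lia) ltac:(lia))).
      pose proof (lower t (k-3)%nat).
      replace (k-3+2)%nat with (k-1)%nat in H by lia.
      replace (4^k) with (4^(k-3) * 4^3) by (rewrite <- pow_add; f_equal; lia).
      assert (0 < 4 ^ (k-3)) by (apply pow_lt; lra).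
      pose proof (Hr (k-1)%nat ltac:(lia)). simpl (4^3). nra.
Qed.
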